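(* Let $z,r$ be real with $z^2+r^2\le1$ and $\rho=\frac12\begin{pmatrix}1+z&r\\ r&1-z\end{pmatrix}$. A state of the form $\rho'=\frac12\begin{pmatrix}1+z'&r'\\ r'&1-z'\end{pmatrix}$ with $z',r'$ real can be obtained as $\rho'=\Lambda(\rho)$ for some physically incoherent operation (PIO) $\Lambda$ on a qubit if and only if the point $(z',r')\in\mathbb{R}^2$ lies in the convex hull of the six points $(z,r),(z,-r),(-z,r),(-z,-r),(1,0),(-1,0)$.
   Context: $\{|0\rangle,|1\rangle\}$ is the computational basis of $\mathbb{C}^2$. A physically incoherent operation (PIO) is a convex combination of channels each having Kraus operators of the form $K_n=U_nP_n$, where $U_n=\sum_i e^{i\theta_{ni}}|\pi_n(i)\rangle\langle i|$ ($\pi_n$ a permutation of $\{0,1\}$, $\theta_{ni}$ real) and $\{P_n\}$ is a complete set of mutually orthogonal diagonal projectors (for a qubit: $\{|0\rangle\langle0|,|1\rangle\langle1|\}$ or $\{I\}$). *)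

(* Defs.v *)
(* Complex scalars: an arbitrary numClosedFieldType C
   (e.g. algC, or the complex numbers); "real" means  x \is Num.real. *)
From HB Require Import structures.
From mathcomp Require Import all_boot all_order all_algebra all_fingroup.
Set Implicit Arguments. Unset Strict Implicit. Unset Printing Implicit Defensive.
Import Order.TTheory GRing.Theory Num.Theory.
Local Open Scope ring_scope.

Section PIO.
Variable C : numClosedFieldType.

Definition adjmx (n m : nat) (A : 'M[C]_(m, n)) : 'M[C]_(n, m) :=
  (map_mx Num.conj A)^T.

(* U = sum_i e_i |pi(i)><i|, with |e_i| = 1 (e_i = exp(i theta_i)) *)
Definition phase_perm_mx (n : nat) (pi : 'S_n) (e : 'I_n -> C) : 'M[C]_n :=
  \matrix_(i < n, j < n) (if i == pi j then e j else 0).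

Definition diag_projector (n : nat) (P : 'M[C]_n) : Prop :=
  (forall i j : 'I_n, i != j -> P i j = 0) /\
  (forall i : 'I_n, P i i = 0 \/ P i i = 1).

Definition complete_orth_diag_projectors (n m : nat) (P : 'I_m -> 'M[C]_n)
  : Prop :=
  (forall a, diag_projector (P a)) /\
  (forall a b, a != b -> P a *m P b = 0) /\
  \sum_(a < m) P a = 1%:M.

Definition is_PIO_channel (n : nat) (L : 'M[C]_n -> 'M[C]_n) : Prop :=
  exists (m : nat) (P : 'I_m -> 'M[C]_n) (pi : 'I_m -> 'S_n)
         (e : 'I_m -> 'I_n -> C),
    complete_orth_diag_projectors P /\
    (forall a i, `|e a i| = 1) /\
    (forall X, L X = \sum_(a < m)
        (phase_perm_mx (pi a) (e a) *m P a) *m X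
          *m adjmx (phase_perm_mx (pi a) (e a) *m P a)).

Definition is_PIO (n : nat) (L : 'M[C]_n -> 'M[C]_n) : Prop :=
  exists (k : nat) (p : 'I_k -> C) (Ls : 'I_k -> 'M[C]_n -> 'M[C]_n),
    (forall j, 0 <= p j) /\ \sum_(j < k) p j = 1 /\
    (forall j, is_PIO_channel (Ls j)) /\
    (forall X, L X = \sum_(j < k) p j *: Ls j X).

Definition qstate (z r : C) : 'M[C]_2 :=
  2^-1 *: \matrix_(i < 2, j < 2)
    (if (i : nat) == 0%N then (if (j : nat) == 0%N then 1 + z else r)
     else (if (j : nat) == 0%N then r else 1 - z)).

Definition six_points (z r : C) : seq (C * C) :=
  [:: (z, r); (z, - r); (- z, r); (- z, - r); (1, 0); (-1, 0)].

Definition in_conv_hull (s : seq (C * C)) (x y : C) : Prop :=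
  exists w : 'I_(size s) -> C,
    (forall i, 0 <= w i) /\ \sum_(i < size s) w i = 1 /\
    x = \sum_(i < size s) w i * (nth (0, 0) s i).1 /\
    y = \sum_(i < size s) w i * (nth (0, 0) s i).2.

End PIO.

(* Main.v *)
Require Import Defs.
From HB Require Import structures.
From mathcomp Require Import all_boot all_order all_algebra all_fingroup.
From mathcomp Require Import ring.
Import Order.TTheory GRing.Theory Num.Theory.
Local Open Scope ring_scope.
Set Implicit Arguments. Unset Strict Implicit. Unset Printing Implicit Defensive.

Section S.
Variable C : numClosedFieldType.

Lemma sum_if_eq n (a : 'I_n) (f : 'I_n -> C) :
  \sum_k (if k == a then f k else 0) = f a.
Proof. by rewrite -big_mkcond big_pred1_eq. Qed.

Lemma adjmxE n m (A : 'M[C]_(m, n)) i j : adjmx A i j = Num.conj (A j i).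
Proof. by rewrite /adjmx !mxE. Qed.

Lemma UP_entry n (pi : 'S_n) (e : 'I_n -> C) (P : 'M[C]_n)
  (hP : forall i j, i != j -> P i j = 0) i k :
  (phase_perm_mx pi e *m P) i k = if k == (pi^-1)%g i then e k * P k k else 0.
Proof.
rewrite mxE (bigD1 k) //= big1 ?addr0; last first.
  by move=> l hl; rewrite hP ?mulr0.
rewrite mxE; have -> : (i == pi k) = (k == (pi^-1)%g i).
  apply/eqP/eqP => [->|->]; by rewrite ?permK ?permKV.
by case: ifP; rewrite ?mul0r.
Qed.

Lemma UPX_entry n (pi : 'S_n) (e : 'I_n -> C) (P X : 'M[C]_n)
  (hP : forall i j, i != j -> P i j = 0) i l :
  (phase_perm_mx pi e *m P *m X) i l =
  e ((pi^-1)%g i) * P ((pi^-1)%g i) ((pi^-1)%g i) * X ((pi^-1)%g i) l.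
Proof.
rewrite mxE -(sum_if_eq _ (fun k => e k * P k k * X k l)).
by apply: eq_bigr => k _; rewrite UP_entry //; case: eqP; rewrite ?mul0r.
Qed.

Lemma kraus_entry n (pi : 'S_n) (e : 'I_n -> C) (P X : 'M[C]_n)
  (hP : forall i j, i != j -> P i j = 0) i j :
  let K := phase_perm_mx pi e *m P in
  (K *m X *m adjmx K) i j =
  e ((pi^-1)%g i) * P ((pi^-1)%g i) ((pi^-1)%g i) * X ((pi^-1)%g i) ((pi^-1)%g j)
   * Num.conj (e ((pi^-1)%g j) * P ((pi^-1)%g j) ((pi^-1)%g j)).
Proof.
move=> K; rewrite mxE.
rewrite -(sum_if_eq _ (fun l => e ((pi^-1)%g i) * P ((pi^-1)%g i) ((pi^-1)%g i) * X ((pi^-1)%g i) l * Num.conj (e l * P l l))).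
apply: eq_bigr => l _; rewrite adjmxE /K UP_entry // UPX_entry //.
by case: eqP; rewrite ?conjC0 ?mulr0.
Qed.
Lemma hull6 (z r a b c d e f : C) : 0 <= a -> 0 <= b -> 0 <= c -> 0 <= d ->
  0 <= e -> 0 <= f -> a + b + c + d + e + f = 1 ->
  in_conv_hull (six_points z r) (a*z + b*z - c*z - d*z + e - f)
     (a*r - b*r + c*r - d*r).
Proof.
move=> ha hb hc hd he hf hs.
exists (fun i : 'I_6 => nth 0 [:: a; b; c; d; e; f] i); split; last split.
- by case=> [[|[|[|[|[|[|?]]]]]] ?].
- by rewrite !big_ord_recl big_ord0 /= addr0 !addrA.
split; rewrite !big_ord_recl big_ord0 /= addr0; ring.
Qed.

Lemma two_neq0 : (2 : C) != 0.
Proof. by rewrite pnatr_eq0. Qed.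

Lemma hull_eq (s : seq (C * C)) x y x' y' :
  in_conv_hull s x y -> x = x' -> y = y' -> in_conv_hull s x' y'.
Proof. by move=> h <- <-. Qed.

Lemma hullZ (z r t : C) : -1 <= t <= 1 ->
  in_conv_hull (six_points z r) z (t * r) /\
  in_conv_hull (six_points z r) (- z) (t * r).
Proof.
move=> /andP [h1 h2].
have hp : 0 <= (1 + t) / 2.
  by rewrite divr_ge0 // (_ : 1 + t = t - (-1)) ?subr_ge0 // opprK addrC.
have hm : 0 <= (1 - t) / 2 by rewrite divr_ge0 // subr_ge0.
have hs : (1 + t) / 2 + (1 - t) / 2 = 1.
  by rewrite -mulrDl addrACA subrr addr0 mulfV // two_neq0.
have e2 : (1 + t) / 2 - (1 - t) / 2 = t.
  by rewrite -mulrBl (_ : 1 + t - (1 - t) = t * 2) ?mulfK ?two_neq0 //; ring.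
have hs' : (1 + t) / 2 + (1 - t) / 2 + 0 + 0 + 0 + 0 = 1 by rewrite !addr0.
have hs'' : 0 + 0 + (1 + t) / 2 + (1 - t) / 2 + 0 + 0 = 1 by rewrite !add0r !addr0.
split.
- apply: (hull_eq (@hull6 z r ((1 + t) / 2) ((1 - t) / 2) 0 0 0 0 hp hm (lexx _) (lexx _) (lexx _) (lexx _) hs')).
  + by rewrite !mul0r !subr0 !addr0 -mulrDl hs mul1r.
  + by rewrite !mul0r !subr0 !addr0 -mulrBl e2.
- apply: (hull_eq (@hull6 z r 0 0 ((1 + t) / 2) ((1 - t) / 2) 0 0 (lexx _) (lexx _) hp hm (lexx _) (lexx _) hs'')).
  + by rewrite !mul0r !subr0 !addr0 add0r -opprD -mulrDl hs mul1r.
  + by rewrite !mul0r subr0 !add0r -mulrBl e2.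
Qed.

Lemma hullE1 (z r : C) : in_conv_hull (six_points z r) 1 0 /\
  in_conv_hull (six_points z r) (-1) 0.
Proof.
split.
- apply: (hull_eq (@hull6 z r 0 0 0 0 1 0 (lexx _) (lexx _) (lexx _) (lexx _) ler01 (lexx _) _)).
  + by rewrite !add0r addr0.
  + by rewrite !mul0r !subr0 !add0r ?subr0.
  + by rewrite !mul0r !subr0 addr0.
- apply: (hull_eq (@hull6 z r 0 0 0 0 0 1 (lexx _) (lexx _) (lexx _) (lexx _) (lexx _) ler01 _)).
  + by rewrite !add0r.
  + by rewrite !mul0r !subr0 !add0r ?sub0r.
  + by rewrite !mul0r !subr0 addr0.
Qed.
Lemma ord2P (i : 'I_2) : i = 0 \/ i = 1.
Proof. by case: i => [[|[|?]] ?] //; [left|right]; apply/eqP. Qed.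

Lemma sum_nat_eq m (c : 'I_m) (g : 'I_m -> C) :
  \sum_a (a == c)%:R * g a = g c.
Proof.
rewrite -(sum_if_eq c g); apply: eq_bigr => a _.
by case: eqP; rewrite ?mul1r ?mul0r.
Qed.

Lemma d_unique m (P : 'I_m -> 'M[C]_2) (hP : complete_orth_diag_projectors P) i :
  exists c, forall a, P a i i = (a == c)%:R.
Proof.
case: hP => hd [ho hs].
have hsum : \sum_a P a i i = 1 by rewrite -summxE hs mxE eqxx.
case: (boolP [exists a, P a i i == 1]) => [/existsP [c /eqP hc]|].
  exists c => a; case: eqP => [->//|/eqP hac].
  have := ho c a; rewrite eq_sym hac => /(_ isT) /(congr1 (fun M : 'M[C]_2 => M i i)).
  rewrite mxE (bigD1 i) //= big1 ?addr0; last first.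
    by move=> j hj; rewrite (proj1 (hd c)) 1?eq_sym // mul0r.
  by rewrite hc mul1r mxE.
move=> /existsPn hn; exfalso.
have : \sum_a P a i i = 0.
  apply: big1 => a _; case: (proj2 (hd a) i) => // h.
  by have := hn a; rewrite h eqxx.
by rewrite hsum => /eqP; rewrite oner_eq0.
Qed.

Lemma qstate00 (z r : C) : qstate z r 0 0 = 2^-1 * (1 + z).
Proof. by rewrite !mxE. Qed.
Lemma qstate01 (z r : C) : qstate z r 0 1 = 2^-1 * r.
Proof. by rewrite !mxE. Qed.
Lemma qstate10 (z r : C) : qstate z r 1 0 = 2^-1 * r.
Proof. by rewrite !mxE. Qed.
Lemma qstate11 (z r : C) : qstate z r 1 1 = 2^-1 * (1 - z).
Proof. by rewrite !mxE. Qed.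

Lemma h2 (x : C) : 2 * (2^-1 * x) = x.
Proof. by rewrite mulrA mulfV ?two_neq0 ?mul1r. Qed.

Lemma Re_bound (c : C) : `|c| = 1 -> -1 <= 'Re c <= 1.
Proof.
move=> hc; rewrite -real_ler_norml ?Creal_Re //.
by rewrite -hc; exact: (leif_normC_Re_Creal c).1.
Qed.
Lemma o01 : ((0 : 'I_2) == 1) = false. Proof. by []. Qed.
Lemma o10 : ((1 : 'I_2) == 0) = false. Proof. by []. Qed.

Lemma term_id m (a : 'I_m) (P : 'I_m -> 'M[C]_2) (e : 'I_m -> 'I_2 -> C) (X : 'M[C]_2) k l
  (cd : forall i, Num.conj (P a i i) = P a i i) :
  e a k * P a k k * X k l * Num.conj (e a l * P a l l) =
  P a k k * P a l l * X k l * (e a k * Num.conj (e a l)).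
Proof. rewrite rmorphM /= cd; ring. Qed.

Lemma chan_fwd (z r : C) m (P : 'I_m -> 'M[C]_2) (pi : 'I_m -> 'S_2)
  (e : 'I_m -> 'I_2 -> C) :
  complete_orth_diag_projectors P -> (forall a i, `|e a i| = 1) ->
  let Y := \sum_(a < m) (phase_perm_mx (pi a) (e a) *m P a) *m qstate z r
          *m adjmx (phase_perm_mx (pi a) (e a) *m P a) in
  exists zz rr, in_conv_hull (six_points z r) zz rr /\
    2 * Y 0 0 = 1 + zz /\ Y 0 1 + Y 1 0 = rr.
Proof.
move=> hP he Y.
have [a0 h0] := d_unique hP 0.
have [b0 h1] := d_unique hP 1.
have hdg a := proj1 (proj1 hP a).
have hPi a i : P a i i = (a == (if i == 0 then a0 else b0))%:R.
  by case: (ord2P i) => ->; rewrite ?h0 ?h1.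
have cd a i : Num.conj (P a i i) = P a i i by rewrite hPi conjC_nat.
have ee a i : e a i * Num.conj (e a i) = 1 by rewrite -normCK he expr1n.
have YE i j : Y i j = \sum_a
   (P a ((pi a)^-1 i)%g ((pi a)^-1 i)%g * P a ((pi a)^-1 j)%g ((pi a)^-1 j)%g
    * qstate z r ((pi a)^-1 i)%g ((pi a)^-1 j)%g
    * (e a ((pi a)^-1 i)%g * Num.conj (e a ((pi a)^-1 j)%g))).
  rewrite /Y summxE; apply: eq_bigr => a _; rewrite kraus_entry; [exact: term_id | exact: hdg].
set k := fun a => ((pi a)^-1)%g (0 : 'I_2).
set l := fun a => ((pi a)^-1)%g (1 : 'I_2).
have kl a :  (k a = 0 /\ l a = 1) \/ (k a = 1 /\ l a = 0).
  have hkl : k a != l a by apply/eqP => /perm_inj.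
  move: hkl; by case: (ord2P (k a)) => ->; case: (ord2P (l a)) => ->; auto.
have PP a i : P a i i * P a i i = P a i i by rewrite hPi -natrM mulnb andbb.
have Y00 : Y 0 0 = (k a0 == 0)%:R * (2^-1 * (1 + z)) + (k b0 == 1)%:R * (2^-1 * (1 - z)).
  rewrite YE.
  rewrite (eq_bigr (fun a => (a == a0)%:R * ((k a == 0)%:R * (2^-1 * (1 + z))) +
      (a == b0)%:R * ((k a == 1)%:R * (2^-1 * (1 - z))))).
    by rewrite big_split /= !sum_nat_eq.
  move=> a _; rewrite -/(k a) ee mulr1 PP.
  case: (kl a) => [[-> _]|[-> _]].
    by rewrite h0 qstate00 eqxx o01 mul0r mulr0 addr0 mul1r.
  by rewrite h1 qstate11 eqxx o10 mul0r mulr0 add0r mul1r.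
set c := fun a => e a (k a) * Num.conj (e a (l a)).
have Yoff : Y 0 1 + Y 1 0 = (a0 == b0)%:R * (2^-1 * r * (c a0 + Num.conj (c a0))).
  rewrite !YE -big_split /=.
  rewrite (eq_bigr (fun a => (a == a0)%:R * ((a == b0)%:R * (2^-1 * r * (c a + Num.conj (c a)))))).
    by rewrite sum_nat_eq.
  move=> a _; rewrite -/(k a) -/(l a) /c rmorphM /= conjCK.
  case: (kl a) => [[-> ->]|[-> ->]]; rewrite h0 h1 qstate01 qstate10; ring.
have hc : `|c a0| = 1 by rewrite /c normrM norm_conjC !he mulr1.
have hRe : c a0 + Num.conj (c a0) = 2 * 'Re (c a0).
  by rewrite ReE mulrC mulfVK ?two_neq0.
have [hZ hZ'] := hullZ z r (Re_bound hc).
have h01 : -1 <= (0:C) <= 1 by rewrite lerN10 ler01.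
have [hZ0 hZ0'] := @hullZ z r 0 h01.
have [hE1 hE1'] := hullE1 z r.
rewrite mul0r in hZ0 hZ0'.
have rE : 2^-1 * r * (2 * 'Re (c a0)) = 'Re (c a0) * r.
  rewrite (_ : 2^-1 * r * (2 * 'Re (c a0)) = (2 * 2^-1) * ('Re (c a0) * r)); last by ring.
  by rewrite mulfV ?two_neq0 ?mul1r.
case: (eqVneq a0 b0) => [eab|nab].
  rewrite Yoff hRe eab eqxx mul1r -eab rE.
  rewrite Y00 -eab; case: (kl a0) => [[-> _]|[-> _]].
    exists z, ('Re (c a0) * r); split=> //; split=> //.
    by rewrite eqxx o01 mul1r mul0r addr0 h2.
  exists (- z), ('Re (c a0) * r); split=> //; split=> //.
  by rewrite eqxx o10 mul1r mul0r add0r h2.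
rewrite Yoff (negbTE nab) mul0r Y00.
case: (kl a0) => [[-> _]|[-> _]]; case: (kl b0) => [[-> _]|[-> _]];
  rewrite ?eqxx ?o01 ?o10 ?mul1r ?mul0r ?addr0 ?add0r.
- by exists z, 0; rewrite h2.
- exists 1, 0; split=> //; split=> //.
  by rewrite -mulrDr h2; ring.
- exists (-1), 0; split=> //; split=> //; by rewrite mulr0 subrr.
- by exists (- z), 0; rewrite h2.
Qed.
Lemma hull_conv (s : seq (C * C)) k (p : 'I_k -> C) (x y : 'I_k -> C) :
  (forall j, 0 <= p j) -> \sum_j p j = 1 ->
  (forall j, in_conv_hull s (x j) (y j)) ->
  in_conv_hull s (\sum_j p j * x j) (\sum_j p j * y j).
Proof.
move=> hp hs /fin_all_exists [W hW].
exists (fun i => \sum_j p j * W j i); split; last split; last split.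
- by move=> i; apply: sumr_ge0 => j _; apply: mulr_ge0 => //; case: (hW j).
- rewrite exchange_big /=; rewrite -hs; apply: eq_bigr => j _.
  by rewrite -mulr_sumr; case: (hW j) => _ [-> _]; rewrite mulr1.
- under [RHS]eq_bigr => i _ do rewrite mulr_suml.
  rewrite exchange_big /=; apply: eq_bigr => j _; case: (hW j) => _ [_ [-> _]].
  by rewrite mulr_sumr; apply: eq_bigr => i _; rewrite mulrA.
- under [RHS]eq_bigr => i _ do rewrite mulr_suml.
  rewrite exchange_big /=; apply: eq_bigr => j _; case: (hW j) => _ [_ [_ ->]].
  by rewrite mulr_sumr; apply: eq_bigr => i _; rewrite mulrA.
Qed.
Lemma fwd (z r z' r' : C) :
  (exists L : 'M[C]_2 -> 'M[C]_2, is_PIO L /\ L (qstate z r) = qstate z' r') ->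
  in_conv_hull (six_points z r) z' r'.
Proof.
move=> [L [[k [p [Ls [hp [hs [hch hL]]]]]] hLX]].
set X := qstate z r.
have : forall j, exists q : C * C, in_conv_hull (six_points z r) q.1 q.2 /\
   2 * Ls j X 0 0 = 1 + q.1 /\ Ls j X 0 1 + Ls j X 1 0 = q.2.
  move=> j; have [mm [P [pi [e [hP [he hf]]]]]] := hch j.
  have := @chan_fwd z r mm P pi e hP he; rewrite /= => -[zz [rr H]].
  by exists (zz, rr); rewrite !hf.
move=> /fin_all_exists [q hq].
have LE i i' : L X i i' = \sum_j p j * Ls j X i i'.
  by rewrite hL summxE; apply: eq_bigr => j _; rewrite mxE.
have ez : z' = \sum_j p j * (q j).1.
  apply: (@addrI _ 1).
  rewrite -(h2 (1 + z')) -(qstate00 z' r') -hLX LE mulr_sumr.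
  rewrite -[in RHS]hs -big_split /=; apply: eq_bigr => j _.
  by rewrite mulrCA (proj1 (proj2 (hq j))) mulrDr mulr1.
have er : r' = \sum_j p j * (q j).2.
  rewrite -{1}(h2 r') mulr2n mulrDl mul1r -{1}(qstate01 z' r') -(qstate10 z' r') -hLX !LE -big_split /=.
  by apply: eq_bigr => j _; rewrite -mulrDr (proj2 (proj2 (hq j))).
rewrite ez er; apply: hull_conv => // j; exact: (proj1 (hq j)).
Qed.
Lemma sum2 (F : 'I_2 -> 'M[C]_2) : \sum_(a < 2) F a = F 0 + F 1.
Proof. by rewrite !big_ord_recl big_ord0 addr0; congr (F _ + F _); apply/eqP.  Qed.
Lemma sum2c (F : 'I_2 -> C) : \sum_(a < 2) F a = F 0 + F 1.
Proof. by rewrite !big_ord_recl big_ord0 addr0; congr (F _ + F _); apply/eqP. Qed.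

Definition Punit (a : 'I_2) : 'M[C]_2 := if a == 0 then 1%:M else 0.
Definition Pmeas (a : 'I_2) : 'M[C]_2 := delta_mx a a.
Definition swp : 'S_2 := tperm 0 1.

Definition Pj (j : 'I_6) := if (j < 4)%N then Punit else Pmeas.
Definition pij (j : 'I_6) (a : 'I_2) : 'S_2 :=
  match (j : nat) with
  | 0 | 1 => 1%g
  | 2 | 3 => swp
  | 4 => if a == 0 then 1%g else swp
  | _ => if a == 0 then swp else 1%g
  end.
Definition ej (j : 'I_6) (a : 'I_2) (i : 'I_2) : C :=
  if ((j : nat) \in [:: 1%N; 3%N]) && (i == 1) then -1 else 1.

Definition Ls (j : 'I_6) (X : 'M[C]_2) : 'M[C]_2 :=
  \sum_(a < 2) (phase_perm_mx (pij j a) (ej j a) *m Pj j a) *m X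
     *m adjmx (phase_perm_mx (pij j a) (ej j a) *m Pj j a).

Lemma Punit_ok : complete_orth_diag_projectors Punit.
Proof.
split; [|split].
- move=> a; split.
    by move=> i j hij; rewrite /Punit; case: eqP => _; rewrite !mxE ?(negbTE hij).
  by move=> i; rewrite /Punit; case: eqP => _; rewrite !mxE ?eqxx; auto.
- move=> a b hab; rewrite /Punit.
  by case: (ord2P a) hab => ->; case: (ord2P b) => -> //= _; rewrite ?mul0mx ?mulmx0.
- by rewrite sum2 /Punit /= addr0.
Qed.

Lemma Pmeas_ok : complete_orth_diag_projectors Pmeas.
Proof.
split; [|split].
- move=> a; split.
    move=> i j hij; rewrite /Pmeas mxE.
    suff -> : ((i == a) && (j == a)) = false by [].
    by apply/andP => -[/eqP ei /eqP ej]; rewrite ei ej eqxx in hij.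
  by move=> i; rewrite /Pmeas mxE; case: (_ && _); auto.
- move=> a b hab; rewrite /Pmeas mul_delta_mx_cond (negbTE hab).
  by rewrite mulr0n.
- apply/matrixP => i j; rewrite sum2 /Pmeas !mxE.
  by case: i => [[|[|?]] ?] //; case: j => [[|[|?]] ?] //=; rewrite ?addr0 ?add0r.
Qed.

Lemma Ls_chan j : is_PIO_channel (Ls j).
Proof.
exists 2, (Pj j), (pij j), (ej j); split; [|split] => //.
- by rewrite /Pj; case: ifP => _; [exact: Punit_ok | exact: Pmeas_ok].
- by move=> a i; rewrite /ej; case: ifP => _; rewrite ?normrN normr1.
Qed.
Lemma Pj_diag j a : forall i i' : 'I_2, i != i' -> Pj j a i i' = 0.
Proof.
rewrite /Pj; case: ifP => _.
  exact: (proj1 (proj1 Punit_ok a)).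
exact: (proj1 (proj1 Pmeas_ok a)).
Qed.

Lemma Ls_out (z r : C) (j : 'I_6) :
  Ls j (qstate z r) = qstate (nth (0, 0) (six_points z r) j).1
                             (nth (0, 0) (six_points z r) j).2.
Proof.
apply/matrixP => i i'; rewrite /Ls summxE sum2c !kraus_entry; try by move=> ? ? ?; apply: Pj_diag.
case: j => [[|[|[|[|[|[|?]]]]]] hj] //=;
rewrite /Pj /pij /ej /Punit /Pmeas /swp /= ?invg1 ?tpermV ?perm1;
case: i => [[|[|?]] ?] //; case: i' => [[|[|?]] ?] //=.
all: rewrite ?permE /= ?mxE /= ?rmorphM /= ?conjC1 ?conjCN1 ?conjC0 ?mulr1 ?mul1r ?mulr0 ?mul0r ?addr0 ?add0r.
all: ring.
Qed.
Lemma qstate_comb k (w x y : 'I_k -> C) : \sum_j w j = 1 ->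
  \sum_j w j *: qstate (x j) (y j) = qstate (\sum_j w j * x j) (\sum_j w j * y j).
Proof.
move=> hs; apply/matrixP => i i'; rewrite summxE.
under eq_bigr => j _ do rewrite !mxE.
rewrite !mxE.
case: i => [[|[|?]] ?] //; case: i' => [[|[|?]] ?] //=.
- rewrite (eq_bigr (fun j => 2^-1 * (w j + w j * x j))); last by move=> j _; ring.
  by rewrite -mulr_sumr big_split /= hs.
- rewrite (eq_bigr (fun j => 2^-1 * (w j * y j))); last by move=> j _; ring.
  by rewrite -mulr_sumr.
- rewrite (eq_bigr (fun j => 2^-1 * (w j * y j))); last by move=> j _; ring.
  by rewrite -mulr_sumr.
- rewrite (eq_bigr (fun j => 2^-1 * (w j - w j * x j))); last by move=> j _; ring.
  by rewrite -mulr_sumr sumrB hs.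
Qed.

Lemma bwd (z r z' r' : C) : in_conv_hull (six_points z r) z' r' ->
  exists L : 'M[C]_2 -> 'M[C]_2, is_PIO L /\ L (qstate z r) = qstate z' r'.
Proof.
move=> [w [hw [hs [ez er]]]].
exists (fun X => \sum_j w j *: Ls j X); split.
  exists 6, w, Ls; split=> //; split=> //; split=> // j; exact: Ls_chan.
under eq_bigr => j _ do rewrite Ls_out.
by rewrite qstate_comb // ez er.
Qed.
End S.

Unset Implicit Arguments.
Set Strict Implicit.

Theorem mainTheorem6 (C : numClosedFieldType) (z r z' r' : C)
  (hz : z \is Num.real) (hr : r \is Num.real)
  (hz' : z' \is Num.real) (hr' : r' \is Num.real)
  (hzr : z ^+ 2 + r ^+ 2 <= 1) :
  (exists L : 'M[C]_2 -> 'M[C]_2, is_PIO L /\ L (qstate z r) = qstate z' r')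
  <-> in_conv_hull (six_points z r) z' r'.
Proof. split; [exact: fwd | exact: bwd]. Qed.
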